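(* Let $(\lambda,\mu,\mu')$ be an admissible triplet with associated weights $\mu^*,\mu'^*$. Then $(\lambda,\mu,\mu')$ is of type 0, i.e. $\langle\lambda+\mu'^*,\alpha_n^\vee\rangle=\lambda_{n-1}+\lambda_n+\mu'^*_{n-1}+\mu'^*_n\ge0$, if and only if the triplet $(\lambda,\mu'^*,\mu^* )$ is admissible.
   Context: Type $D_n$ weights are $(\lambda_1,\dots,\lambda_n)$; $\langle\lambda,\alpha_j^\vee\rangle=\lambda_j-\lambda_{j+1}$ for $j<n$ and $\langle\lambda,\alpha_n^\vee\rangle=\lambda_{n-1}+\lambda_n$; $P_+=\{\lambda_j\in\frac12\mathbb Z,\lambda_j-\lambda_k\in\mathbb Z,\lambda_1\ge\dots\ge\lambda_n,\lambda_{n-1}+\lambda_n\ge0\}$; $P[S]=\{(\pm\frac12,\dots,\pm\frac12)\}$. For $k\ge0$, $\Delta^k$ is the set of sums $\mu_1+\dots+\mu_k$ over tuples $(\mu_1,\dots,\mu_k)\in P[S]^k$ all of whose partial sums lie in $P_+$ ($\Delta^0=\{0\}$). A triplet $(\lambda,\mu,\mu')$ is admissible if $\lambda\in\Delta^k$ for some $k\ge0$, $\mu,\mu'\in P[S]$, and $\lambda+\mu,\ \lambda+\mu+\mu'\in P_+$. A free interval of the triplet is a subset $\mathrm{Fr}\subset\{1,\dots,n\}$, maximal with respect to inclusion, such that $\lambda_j$ is constant on $\mathrm{Fr}$ and $\mu_j\mu'_j<0$ for all $j\in\mathrm{Fr}$. The weights $\mu^*,\mu'^*$: outside free intervals they agree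 with $\mu,\mu'$; on each free interval $\mathrm{Fr}$, with $b$ the number of $j\in\mathrm{Fr}$ with $\mu'_j=+\frac12$, $\mu'^*_j=+\frac12$ on the $b$ smallest elements of $\mathrm{Fr}$ and $-\frac12$ on the rest, and $\mu^*_j=-\mu'^*_j$ on $\mathrm{Fr}$. *)

(* Defs.v *)
From HB Require Import structures.
From mathcomp Require Import all_boot all_order all_algebra.
Set Implicit Arguments. Unset Strict Implicit. Unset Printing Implicit Defensive.
Import Order.TTheory GRing.Theory Num.Theory.
Local Open Scope ring_scope.

(* A weight (lambda_1, ..., lambda_n); the paper's index j (1 <= j <= n)
   corresponds to the ordinal j-1 : 'I_n. *)
Definition weight (n : nat) := {ffun 'I_n -> rat}.

(* 1-based coordinate access: coord l j = lambda_j for 1 <= j <= n (0 otherwise). *)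
Definition coord {n : nat} (l : weight n) (j : nat) : rat :=
  if j is j'.+1 then (if insub j' is Some i then l i else 0) else 0.

Definition pair_alpha_n {n : nat} (l : weight n) : rat :=
  coord l n.-1 + coord l n.

Definition is_int (x : rat) : Prop := exists z : int, x = z%:~R.

Definition dominant {n : nat} (l : weight n) : Prop :=
  (forall j : 'I_n, is_int (2 * l j)) /\
  (forall j k : 'I_n, is_int (l j - l k)) /\
  (forall j k : 'I_n, (j <= k)%N -> l k <= l j) /\
  0 <= pair_alpha_n l.

Definition spin {n : nat} (m : weight n) : Prop :=
  forall j : 'I_n, m j = 1/2 \/ m j = - (1/2).

Definition inDelta {n : nat} (k : nat) (l : weight n) : Prop :=
  exists ms : seq (weight n),
    [/\ size ms = k,
        (forall m, m \in ms -> spin m),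
        (forall i, (1 <= i <= k)%N -> dominant (\sum_(m <- take i ms) m))
      & l = \sum_(m <- ms) m].

Definition admissible {n : nat} (l m m' : weight n) : Prop :=
  [/\ exists k, inDelta k l, spin m, spin m', dominant (l + m) & dominant (l + m + m')].

Definition free_prop {n : nat} (l m m' : weight n) (F : {set 'I_n}) : bool :=
  [forall j in F, forall k in F, l j == l k] && [forall j in F, m j * m' j < 0].

Definition free_interval {n : nat} (l m m' : weight n) (F : {set 'I_n}) : bool :=
  maxset (free_prop l m m') F.

Definition mu'star {n : nat} (l m m' : weight n) : weight n :=
  [ffun j => match [pick F | free_interval l m m' F & j \in F] with
             | Some F =>
                 if (#|[set k in F | (k < j)%N]| < #|[set k in F | m' k == 1/2]|)%N
                 then 1/2 else - (1/2)
             | None => m' j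
             end].

Definition mustar {n : nat} (l m m' : weight n) : weight n :=
  [ffun j => match [pick F | free_interval l m m' F & j \in F] with
             | Some _ => - mu'star l m m' j
             | None => m j
             end].

(* Main.v *)
Require Import Defs.
From mathcomp Require Import all_boot all_order all_algebra.
From mathcomp Require Import ring lra.
Import Order.TTheory GRing.Theory Num.Theory.
Local Open Scope ring_scope.

Definition half (x : rat) := x = 1/2 \/ x = -(1/2).

Lemma is_int_add a b : is_int a -> is_int b -> is_int (a + b).
Proof. by move=> [x ->] [y ->]; exists (x + y); rewrite intrD. Qed.

Lemma is_int_halves x y : half x -> half y -> is_int (x - y).
Proof.
move=> [->|->] [->|->]; [exists 0 | exists 1 | exists (-1) | exists 0]; by apply/eqP.
Qed.

Lemma prod_neg x y : half x -> half y -> x * y < 0 -> x = - y.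
Proof. move=> [->|->] [->|->]; lra. Qed.

Arguments is_int_add {a b}.
Arguments is_int_halves {x y}.
Arguments prod_neg {x y}.
Lemma prod_nneg x y : half x -> half y -> ~ (x * y < 0) -> x = y.
Proof. move=> [->|->] [->|->]; lra. Qed.

Arguments prod_nneg {x y}.
Lemma free_propP n (l m m' : weight n) (F : {set 'I_n}) :
  reflect ((forall j k, j \in F -> k \in F -> l j = l k) /\
           (forall j, j \in F -> m j * m' j < 0)) (free_prop l m m' F).
Proof.
apply: (iffP andP) => [[/forall_inP H1 /forall_inP H2]|[H1 H2]]; split.
- by move=> j k jF kF; apply/eqP/(forall_inP (H1 j jF)).
- exact H2.
- by apply/forall_inP => j jF; apply/forall_inP => k kF; apply/eqP; exact: H1.
- exact/forall_inP.
Qed.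

Lemma free_neg n (l m m' : weight n) F j :
  free_interval l m m' F -> j \in F -> m j * m' j < 0.
Proof. by move=> /maxsetp /free_propP [_ H]; apply: H. Qed.

Arguments free_neg {n l m m' F j}.
Lemma free_union n (l m m' : weight n) A B a b :
  free_prop l m m' A -> free_prop l m m' B -> a \in A -> b \in B -> l a = l b ->
  free_prop l m m' (A :|: B).
Proof.
move=> /free_propP[A1 A2] /free_propP[B1 B2] aA bB lab; apply/free_propP; split.
- move=> j k; rewrite !inE => /orP[jA|jB] /orP[kA|kB].
  + exact: A1.
  + by rewrite (A1 j a) // lab; apply: B1.
  + by rewrite (B1 j b) // -lab; apply: A1.
  + exact: B1.
- by move=> j; rewrite inE => /orP[]; [apply: A2 | apply: B2].
Qed.

Arguments free_union {n l m m' A B a b}.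
Lemma free_eq n (l m m' : weight n) A B a b :
  free_interval l m m' A -> free_interval l m m' B -> a \in A -> b \in B -> l a = l b ->
  A = B.
Proof.
move=> HA HB aA bB lab.
have HU := free_union (maxsetp HA) (maxsetp HB) aA bB lab.
have e1 := maxsetsup HA HU (subsetUl A B).
have e2 := maxsetsup HB HU (subsetUr A B).
by rewrite -{1}e1.
Qed.

Arguments free_eq {n l m m' A B a b}.
Lemma in_some n (l m m' : weight n) j :
  m j * m' j < 0 -> exists F, free_interval l m m' F && (j \in F).
Proof.
move=> H.
have Hj : free_prop l m m' [set j].
  apply/free_propP; split => [a b|a]; rewrite !inE.
  - by move=> /eqP -> /eqP ->.
  - by move=> /eqP ->.
case: (maxset_exists Hj) => F HF sub; exists F; apply/andP; split; first exact: HF.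
by apply: (subsetP sub); rewrite inE.
Qed.

Arguments in_some {n} l {m m' j}.
Lemma spin_star n (l m m' : weight n) : spin m' -> spin (mu'star l m m').
Proof.
move=> Hs j; rewrite ffunE; case: pickP => [F _|_]; last exact: Hs.
by case: ifP => _; [left|right].
Qed.

Arguments spin_star {n} l m {m'}.
Lemma spin_mustar n (l m m' : weight n) : spin m -> spin m' -> spin (mustar l m m').
Proof.
move=> Hm Hs j; rewrite ffunE; case: pickP => [F _|_]; last exact: Hm.
by case: (spin_star l m Hs j) => ->; [right|left]; rewrite ?opprK.
Qed.

Lemma mono n (l m m' : weight n) (j k : 'I_n) :
  admissible l m m' -> (j <= k)%N ->
  l k + mu'star l m m' k <= l j + mu'star l m m' j.
Proof.
case=> [[kk Hd] Hm Hm' Hlm Hlmm'] jk.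
have lmono : l k <= l j.
  case: Hd => ms [sz _ Hdom ->]; case: kk sz Hdom => [|kk] sz Hdom.
  - move/eqP: sz; rewrite size_eq0 => /eqP ->; rewrite big_nil !ffunE; lra.
  - have := Hdom kk.+1 (leqnn _); rewrite -sz take_size.
    by case=> _ [_ [H _]]; exact: H.
have e1 : l k + m k <= l j + m j.
  by case: Hlm => _ [_ [H _]]; have := H j k jk; rewrite !ffunE.
have e2 : l k + m k + m' k <= l j + m j + m' j.
  by case: Hlmm' => _ [_ [H _]]; have := H j k jk; rewrite !ffunE.
have dint : is_int (l j - l k).
  case: Hlm => _ [H _]; have := H j k; rewrite !ffunE => Hi.
  have -> : l j - l k = (l j + m j - (l k + m k)) + (m k - m j) by ring.
  exact: is_int_add Hi (is_int_halves (Hm k) (Hm j)).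
have Hsj := spin_star l m Hm' j; have Hsk := spin_star l m Hm' k.
have [ljk|ljk] := eqVneq (l j) (l k); last first.
  have : 1 <= l j - l k.
    case: dint => z hz; rewrite hz.
    have : 0 < (z%:~R : rat).
      by rewrite -hz subr_gt0 lt_neqAle eq_sym ljk lmono.
    by rewrite ltr0z ler1z.
  by case: Hsj => ->; case: Hsk => ->; lra.
have Hmj := Hm j; have Hmk := Hm k; have Hm'j := Hm' j; have Hm'k := Hm' k.
rewrite /mu'star !ffunE.
case: pickP => [G /andP[HG kG]|Nk]; case: pickP => [F /andP[HF jF]|Nj].
- have FG : F = G := free_eq HF HG jF kG ljk. subst G.
  have cjk : (#|[set x in F | (x < j)%N]| <= #|[set x in F | (x < k)%N]|)%N.
    apply: subset_leq_card; apply/subsetP => x; rewrite !inE => /andP[-> xj].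
    exact: leq_trans xj jk.
  case: ifP => h1; case: ifP => h2; try lra;
  first [by rewrite (leq_ltn_trans cjk h1) in h2
        | by rewrite (leq_ltn_trans cjk h2) in h1].
- have pk := prod_neg Hmk Hm'k (free_neg HG kG).
  have pj : m j = m' j.
    apply: prod_nneg => // /(in_some l) [F HF].
    by move: (Nj F) => /=; rewrite HF.
  by case: ifP => _; case: Hmj; case: Hm'j; case: Hmk; case: Hm'k; lra.
- have pj := prod_neg Hmj Hm'j (free_neg HF jF).
  have pk : m k = m' k.
    apply: prod_nneg => // /(in_some l) [G HG].
    by move: (Nk G) => /=; rewrite HG.
  by case: ifP => _; case: Hmj; case: Hm'j; case: Hmk; case: Hm'k; lra.
- have pk : m k = m' k.
    apply: prod_nneg => // /(in_some l) [G HG].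
    by move: (Nk G) => /=; rewrite HG.
  have pj : m j = m' j.
    apply: prod_nneg => // /(in_some l) [F HF].
    by move: (Nj F) => /=; rewrite HF.
  by case: Hmj; case: Hm'j; case: Hmk; case: Hm'k; lra.
Qed.

Lemma addfE n (f g : weight n) x : (f + g) x = f x + g x.
Proof. by rewrite ffunE. Qed.

Theorem corollary6p1 (n : nat) (hn : (2 <= n)%N) (l m m' : weight n) :
  admissible l m m' ->
  (0 <= pair_alpha_n (l + mu'star l m m')
   <-> admissible l (mu'star l m m') (mustar l m m')).
Proof.
move=> Hadm; have Hadm' := Hadm.
case: Hadm' => Hk Hm Hm' Hlm Hlmm'.
split; last by case=> _ _ _ [_ [_ [_ H]]].
move=> H0; split => //.
- exact: spin_star.
- exact: spin_mustar.
- split; [|split; [|split]] => //.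
  + move=> j; rewrite addfE.
    case: Hlm => H1 _; have Hi := H1 j; rewrite addfE in Hi.
    have hh := is_int_halves (spin_star l m Hm' j) (Hm j).
    have -> : 2 * (l j + mu'star l m m' j)
      = 2 * (l j + m j) + ((mu'star l m m' j - m j) + (mu'star l m m' j - m j)) by ring.
    exact: is_int_add Hi (is_int_add hh hh).
  + move=> j k; rewrite !addfE.
    case: Hlm => _ [H1 _]; have Hi := H1 j k; rewrite !addfE in Hi.
    have hj := is_int_halves (spin_star l m Hm' j) (Hm j).
    have hk := is_int_halves (Hm k) (spin_star l m Hm' k).
    have -> : l j + mu'star l m m' j - (l k + mu'star l m m' k)
      = (l j + m j - (l k + m k)) + ((mu'star l m m' j - m j) + (m k - mu'star l m m' k)) by ring.
    exact: is_int_add Hi (is_int_add hj hk).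
  + by move=> j k jk; rewrite !addfE; apply: mono.
- have -> : l + mu'star l m m' + mustar l m m' = l + m + m'; last by [].
  apply/ffunP => j; rewrite !addfE [X in _ + X = _]ffunE.
  case: pickP => [F /andP[HF jF]|N].
    have pj := prod_neg (Hm j) (Hm' j) (free_neg HF jF).
    rewrite pj; ring.
  rewrite [mu'star l m m' j]ffunE; case: pickP => [F /andP[HF jF]|_]; last ring.
  by move: (N F); rewrite /= HF jF.
Qed.
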